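(* Consider the problem and algorithm AC2CD described in the context, let $\{x^k\}$ be a sequence produced by AC2CD, and assume $\lim_{k\to\infty}x^k=x^*$. Then there exists an outer iteration $k_z$ such that, for all $k\ge k_z$, \[ l_{j(k)}<z^{k,i}_{j(k)}<u_{j(k)},\quad i=1,\dots,n+1. \]
   Context: Problem: minimize $f(x)$ subject to $e^T x = b$ and $l_i \le x_i \le u_i$ ($i=1,\dots,n$), where $n\ge 2$, $e$ is the all-ones vector, $b\in\mathbb{R}$, $l_i\in\mathbb{R}\cup\{-\infty\}$, $u_i\in\mathbb{R}\cup\{+\infty\}$, $l_i<u_i$, and $f:\mathbb{R}^n\to\mathbb{R}$ is continuously differentiable with $\nabla f$ Lipschitz continuous on $\mathbb{R}^n$. $\mathcal F$ is the feasible set, $e_i$ the $i$th unit vector. For $x\in\mathcal F$, $D_h(x)=\min\{x_h-l_h,u_h-x_h\}$. Algorithm AC2CD with parameters $\tau\in(0,1]$, $\gamma,\delta\in(0,1)$, $0<A_l\le A_u<\infty$ and starting point $x^0\in\mathcal F$: for $k=0,1,2,\dots$: let $D^k=\max_h D_h(x^k)$; choose $j(k)$ with $D_{j(k)}(x^k)\ge\tau D^k$; choose a permutation $(p^k_1,\dots,p^k_n)$ of $\{1,\dots,n\}$; set $z^{k,1}=x^k$; for $i=1,\dots,n$ (inner iteration $(k,i)$): $g^{k,i}=\nabla_{j(k)}f(z^{k,i})-\nabla_{p^k_i}f(z^{k,i})$, $d^{k,i}=g^{k,i}(e_{p^k_i}-e_{j(k)})$; $\bar\alpha^{k,i}=\min\{u_{p^k_i}-z^{k,i}_{p^k_i},z^{k,i}_{j(k)}-l_{j(k)}\}/g^{k,i}$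 if $g^{k,i}>0$, $=\min\{z^{k,i}_{p^k_i}-l_{p^k_i},u_{j(k)}-z^{k,i}_{j(k)}\}/|g^{k,i}|$ if $g^{k,i}<0$, $=0$ if $g^{k,i}=0$; choose $A^{k,i}\in[A_l,A_u]$, set $\Delta^{k,i}=\min\{\bar\alpha^{k,i},A^{k,i}\}$; starting from $\alpha=\Delta^{k,i}$, while $f(z^{k,i}+\alpha d^{k,i})>f(z^{k,i})+\gamma\alpha\nabla f(z^{k,i})^Td^{k,i}$ replace $\alpha$ by $\delta\alpha$; $\alpha^{k,i}$ is the final $\alpha$ and $z^{k,i+1}=z^{k,i}+\alpha^{k,i}d^{k,i}$. Then $x^{k+1}=z^{k,n+1}$. Standing assumptions: $\mathcal L_0=\{x\in\mathcal F: f(x)\le f(x^0)\}$ is nonempty and compact, and every $x\in\mathcal L_0$ has some index $i$ with $l_i<x_i<u_i$. *)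

(* Defs.v *)
From HB Require Import structures.
From mathcomp Require Import all_boot all_order all_algebra.
From mathcomp Require Import fingroup perm.
From mathcomp Require Import all_classical all_reals all_analysis.
Set Implicit Arguments. Unset Strict Implicit. Unset Printing Implicit Defensive.
Import Order.TTheory GRing.Theory Num.Theory.
Import numFieldNormedType.Exports.
Local Open Scope ring_scope.

(* Points of R^n are row vectors 'rV[R]_n; the i-th coordinate of x is x 0 i.
   Bounds l_i, u_i are extended reals (l_i may be -oo, u_i may be +oo). *)

Definition dotv (R : realType) (n : nat) (v w : 'rV[R]_n) : R :=
  \sum_(i < n) v 0 i * w 0 i.

Definition unitv (R : realType) (n : nat) (i : 'I_n) : 'rV[R]_n :=
  \row_(h < n) (if h == i then 1 else 0).

Definition feasible (R : realType) (n : nat) (l u : 'I_n -> \bar R) (b : R)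
  (x : 'rV[R]_n) : Prop :=
  \sum_(i < n) x 0 i = b /\ forall i, (l i <= (x 0 i)%:E)%E /\ ((x 0 i)%:E <= u i)%E.

Definition Dh (R : realType) (n : nat) (l u : 'I_n -> \bar R) (x : 'rV[R]_n)
  (h : 'I_n) : \bar R :=
  Order.min ((x 0 h)%:E - l h)%E (u h - (x 0 h)%:E)%E.

Definition Dmax (R : realType) (n : nat) (l u : 'I_n -> \bar R) (x : 'rV[R]_n)
  : \bar R :=
  \big[Order.max/-oo%E]_(h < n) Dh l u x h.

Definition gcoef (R : realType) (n : nat) (gradf : 'rV[R]_n -> 'rV[R]_n)
  (j p : 'I_n) (z : 'rV[R]_n) : R :=
  gradf z 0 j - gradf z 0 p.

Definition dir (R : realType) (n : nat) (gradf : 'rV[R]_n -> 'rV[R]_n)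
  (j p : 'I_n) (z : 'rV[R]_n) : 'rV[R]_n :=
  gcoef gradf j p z *: (unitv R p - unitv R j).

(* maximal feasible stepsize \bar\alpha (possibly +oo) *)
Definition alphabar (R : realType) (n : nat) (l u : 'I_n -> \bar R)
  (gradf : 'rV[R]_n -> 'rV[R]_n) (j p : 'I_n) (z : 'rV[R]_n) : \bar R :=
  let g := gcoef gradf j p z in
  if 0 < g then
    (Order.min (u p - (z 0 p)%:E) ((z 0 j)%:E - l j) * (g^-1)%:E)%E
  else if g < 0 then
    (Order.min ((z 0 p)%:E - l p) (u j - (z 0 j)%:E) * (`|g|^-1)%:E)%E
  else 0%E.

(* Delta = min { \bar\alpha, A } (a real number since A is real) *)
Definition Delta (R : realType) (n : nat) (l u : 'I_n -> \bar R)
  (gradf : 'rV[R]_n -> 'rV[R]_n) (j p : 'I_n) (z : 'rV[R]_n) (A : R) : R :=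
  fine (Order.min (alphabar l u gradf j p z) A%:E).

Definition armijo (R : realType) (n : nat) (f : 'rV[R]_n -> R)
  (gradf : 'rV[R]_n -> 'rV[R]_n) (gamma : R) (z d : 'rV[R]_n) (a : R) : Prop :=
  f (z + a *: d) <= f z + gamma * a * dotv (gradf z) d.

(* Inner index i ranges over 0..n-1 (paper: 1..n), and z k i for i = 0..n
   corresponds to the paper's z^{k,1},...,z^{k,n+1}. *)
Definition AC2CD_run (R : realType) (n : nat) (f : 'rV[R]_n -> R)
  (gradf : 'rV[R]_n -> 'rV[R]_n) (l u : 'I_n -> \bar R)
  (tau gamma delta Al Au : R)
  (x : nat -> 'rV[R]_n) (j : nat -> 'I_n) (p : nat -> ({perm 'I_n}))
  (A : nat -> nat -> R) (z : nat -> nat -> 'rV[R]_n) (alpha : nat -> nat -> R)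
  : Prop :=
  forall k : nat,
    (Dh l u (x k) (j k) >= tau%:E * Dmax l u (x k))%E /\
    z k 0%N = x k /\
    x k.+1 = z k n /\
    forall i : 'I_n,
      let zi := z k i in
      let jk := j k in
      let pi := p k i in
      let di := dir gradf jk pi zi in
      let Dl := Delta l u gradf jk pi zi (A k i) in
      Al <= A k i <= Au /\
      (exists m : nat,
          alpha k i = delta ^+ m * Dl /\
          armijo f gradf gamma zi di (delta ^+ m * Dl) /\
          forall m' : nat, (m' < m)%N ->
            ~ armijo f gradf gamma zi di (delta ^+ m' * Dl)) /\
      z k i.+1 = zi + alpha k i *: di.

(* Main.v *)
Require Import Defs.
From HB Require Import structures.
From mathcomp Require Import all_boot all_order all_algebra.
From mathcomp Require Import fingroup perm.
From mathcomp Require Import all_classical all_reals all_analysis.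
From mathcomp Require Import ring lra.
Import Order.TTheory GRing.Theory Num.Theory.
Import numFieldNormedType.Exports.
Set Implicit Arguments. Unset Strict Implicit.
Local Open Scope classical_set_scope.
Local Open Scope ring_scope.

Section Ereal.
Variable R : realType.
Local Open Scope ereal_scope.

Lemma Delta_prop (ab : \bar R) (A : R) : 0 <= ab -> (0 < A)%R ->
  (0 <= fine (Order.min ab A%:E) <= A)%R /\ (fine (Order.min ab A%:E))%:E <= ab.
Proof.
case: ab => [r| |] // r0 A0.
- rewrite lee_fin in r0.
  case: (leP r A) => hr.
  + rewrite min_l ?lee_fin //=; split=> //; apply/andP; split=> //.
  + rewrite min_r; last by rewrite lee_fin ltW.
    by rewrite /= (ltW A0) lexx lee_fin ltW.
- rewrite min_r ?leey //=; split; first by rewrite (ltW A0) lexx.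
  by [].
Qed.

Lemma div_le (t : R) (M : \bar R) (r : R) : (0 < r)%R ->
  t%:E <= M * (r^-1)%:E -> (t * r)%:E <= M.
Proof.
move=> r0; case: M => [s| |] /=.
- by rewrite -EFinM lee_fin ler_pdivlMr.
- by move=> _; apply: leey.
- by rewrite gt0_mulNye ?lte_fin ?invr_gt0.
Qed.

Lemma le_subU (s y : R) (U : \bar R) : s%:E <= U - y%:E -> (y + s)%:E <= U.
Proof. by case: U => [c| |] //=; rewrite -?EFinB ?lee_fin ?leey // => h; lra. Qed.

Lemma le_subL (s y : R) (L : \bar R) : s%:E <= y%:E - L -> L <= (y - s)%:E.
Proof.
case: L => [c| |] //=; last by rewrite leNye.
by rewrite -EFinB !lee_fin => h; lra.
Qed.

Lemma lt_subL (s y t : R) (L : \bar R) : s%:E <= y%:E - L -> (`|t - y| < s)%R -> L < t%:E.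
Proof.
case: L => [c| |] //=; rewrite -?EFinB ?lee_fin ?lte_fin => h1 h2; last by rewrite ltNyr.
move: h2; rewrite ltr_norml => /andP[]; lra.
Qed.

Lemma lt_subU (s y t : R) (U : \bar R) : s%:E <= U - y%:E -> (`|t - y| < s)%R -> t%:E < U.
Proof.
case: U => [c| |] //=; rewrite -?EFinB ?lee_fin ?lte_fin => h1 h2; last by rewrite ltry.
move: h2; rewrite ltr_norml => /andP[]; lra.
Qed.

End Ereal.


Section Step.
Variables (R : realType) (n : nat) (gradf : 'rV[R]_n -> 'rV[R]_n) (l u : 'I_n -> \bar R).

Definition box (z : 'rV[R]_n) := forall h, (l h <= (z 0 h)%:E)%E /\ ((z 0 h)%:E <= u h)%E.

Lemma entry_step (z : 'rV[R]_n) jj pp a h :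
  (z + a *: dir gradf jj pp z) 0 h = z 0 h + a * gcoef gradf jj pp z *
    ((if h == pp then 1 else 0) - (if h == jj then 1 else 0)).
Proof. by rewrite /dir /unitv !mxE mulrA. Qed.

Lemma sub_ge0U (y : R) (U : \bar R) : ((y%:E <= U) -> 0 <= U - y%:E)%E.
Proof. case: U => [c| |] //=; rewrite -?EFinB ?lee_fin ?subr_ge0 // => _; by rewrite addye. Qed.

Lemma sub_ge0L (y : R) (L : \bar R) : ((L <= y%:E) -> 0 <= y%:E - L)%E.
Proof. case: L => [c| |] //=; rewrite -?EFinB ?lee_fin ?subr_ge0 // => _; by rewrite addey. Qed.

Lemma box_move (z w : 'rV[R]_n) pp jj (s : R) : box z -> pp != jj ->
  ((0 <= s) /\ (s%:E <= u pp - (z 0 pp)%:E)%E /\ (s%:E <= (z 0 jj)%:E - l jj)%E) \/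
  ((s <= 0) /\ ((-s)%:E <= (z 0 pp)%:E - l pp)%E /\ ((-s)%:E <= u jj - (z 0 jj)%:E)%E) ->
  (forall h, w 0 h = z 0 h + s * ((if h == pp then 1 else 0) - (if h == jj then 1 else 0))) ->
  box w.
Proof.
move=> bz npj hs hw h; rewrite hw.
case: (eqVneq h pp) => [->|nhp].
  have [lz zu] := bz pp.
  rewrite (negbTE npj) subr0 mulr1.
  case: hs => [[s0 [s1 s2]]|[s0 [s1 s2]]]; split.
  - by apply: (le_trans lz); rewrite lee_fin lerDl.
  - exact: le_subU.
  - by rewrite -[s]opprK; apply: le_subL.
  - by apply: le_trans zu; rewrite lee_fin gerDl.
case: (eqVneq h jj) => [->|nhj].
  have [lz zu] := bz jj.
  rewrite sub0r mulrN1.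
  case: hs => [[s0 [s1 s2]]|[s0 [s1 s2]]]; split.
  - exact: le_subL.
  - by apply: le_trans zu; rewrite lee_fin gerDl oppr_le0.
  - by apply: (le_trans lz); rewrite lee_fin lerDl oppr_ge0.
  - exact: le_subU.
by rewrite ?(negbTE nhp) ?(negbTE nhj) subrr mulr0 addr0; apply: bz.
Qed.

Lemma step_box (z : 'rV[R]_n) jj pp (A c : R) : box z -> 0 < A -> 0 <= c <= 1 ->
  let a := c * Delta l u gradf jj pp z A in
  (0 <= a <= A) /\ box (z + a *: dir gradf jj pp z).
Proof.
move=> bz A0 /andP[c0 c1] a.
set g := gcoef gradf jj pp z.
have hw := entry_step z jj pp a; rewrite -/g in hw.
have Hpj : g != 0 -> pp != jj.
  by move=> gn0; apply/eqP => epj; move: gn0; rewrite /g /gcoef epj subrr eqxx.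
have key : forall ab : \bar R, (0 <= ab)%E -> Delta l u gradf jj pp z A = fine (Order.min ab A%:E) ->
   (0 <= a <= A) /\ (0 <= Delta l u gradf jj pp z A) /\ (((Delta l u gradf jj pp z A) * 1)%:E <= ab)%E.
  move=> ab ab0 hD; have [/andP[D0 DA] Dab] := Delta_prop ab0 A0.
  rewrite -hD in D0 DA Dab; rewrite mulr1; split; last by split.
  by rewrite /a; apply/andP; split; nra.
case: (ltgtP g 0) => [hg|hg|hg].
-
  have hab : alphabar l u gradf jj pp z = (Order.min ((z 0 pp)%:E - l pp) (u jj - (z 0 jj)%:E) * (`|g|^-1)%:E)%E.
    by rewrite /alphabar -/g ltNge (ltW hg) /= hg.
  have ab0 : (0 <= alphabar l u gradf jj pp z)%E.
    rewrite hab mule_ge0 // ?lee_fin ?invr_ge0 // le_min; apply/andP; split.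
      by apply: sub_ge0L; case: (bz pp).
    by apply: sub_ge0U; case: (bz jj).
  have [ha [D0 hD]] := key _ ab0 erefl.
  split=> //; apply: (box_move bz (Hpj (ltr0_neq0 hg))) (hw); right.
  move: hD; rewrite mulr1 hab => /div_le.
  have ga : 0 < `|g| by rewrite normr_gt0 ltr0_neq0.
  move=> /(_ ga); rewrite le_min => /andP[h1 h2].
  have hs : (- (a * g)) <= Delta l u gradf jj pp z A * `|g|.
    have t : 0 <= Delta l u gradf jj pp z A * (- g) by rewrite mulr_ge0 // oppr_ge0 ltW.
    rewrite ltr0_norm // /a; nra.
  have /andP[a0 _] := ha.
  split; first by nra.
  by split; [apply: le_trans h1 | apply: le_trans h2]; rewrite lee_fin.
-
  have hab : alphabar l u gradf jj pp z = (Order.min (u pp - (z 0 pp)%:E) ((z 0 jj)%:E - l jj) * (g^-1)%:E)%E.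
    by rewrite /alphabar -/g hg.
  have ab0 : (0 <= alphabar l u gradf jj pp z)%E.
    rewrite hab; apply: mule_ge0; last by rewrite lee_fin invr_ge0 ltW.
    rewrite le_min; apply/andP; split.
      by apply: sub_ge0U; case: (bz pp).
    by apply: sub_ge0L; case: (bz jj).
  have [ha [D0 hD]] := key _ ab0 erefl.
  split=> //; apply: (box_move bz (Hpj (lt0r_neq0 hg))) (hw); left.
  move: hD; rewrite mulr1 hab => /div_le.
  move=> /(_ hg); rewrite le_min => /andP[h1 h2].
  have hs : a * g <= Delta l u gradf jj pp z A * g.
    have t : 0 <= Delta l u gradf jj pp z A * g by rewrite mulr_ge0 // ltW.
    rewrite /a; nra.
  have /andP[a0 _] := ha.
  split; first by nra.
  by split; [apply: le_trans h1 | apply: le_trans h2]; rewrite lee_fin.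
-
  have hab : alphabar l u gradf jj pp z = 0%E.
    by rewrite /alphabar -/g hg ltxx.
  have ab0 : (0 <= alphabar l u gradf jj pp z)%E by rewrite hab.
  have [ha _] := key _ ab0 erefl.
  split=> //; move=> h; rewrite hw -/g hg mulr0 mul0r addr0; exact: bz.
Qed.
End Step.
Section Step2.
Variables (R : realType) (n : nat) (gradf : 'rV[R]_n -> 'rV[R]_n).

Lemma sum_ind (v : 'rV[R]_n) p :
  \sum_(h < n) v 0 h * (if h == p then 1 else 0) = v 0 p.
Proof.
rewrite (bigD1 p) //= eqxx mulr1 big1 ?addr0 // => h /negbTE ->; by rewrite mulr0.
Qed.

Lemma sum_ind1 p : \sum_(h < n) (if h == p then 1 else 0 : R) = 1.
Proof.
rewrite (bigD1 p) //= eqxx big1 ?addr0 // => h /negbTE -> //.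
Qed.

Lemma dot_dir (z : 'rV[R]_n) jj pp :
  dotv (gradf z) (dir gradf jj pp z) = - (gcoef gradf jj pp z) ^+ 2.
Proof.
set g := gcoef gradf jj pp z.
have E : forall h, gradf z 0 h * dir gradf jj pp z 0 h =
   g * (gradf z 0 h * (if h == pp then 1 else 0)) - g * (gradf z 0 h * (if h == jj then 1 else 0)).
  by move=> h; rewrite /dir /unitv !mxE -/g; ring.
rewrite /dotv (eq_bigr _ (fun h _ => E h)) sumrB -!mulr_sumr !sum_ind /g /gcoef; ring.
Qed.

Lemma sum_step (z : 'rV[R]_n) jj pp a :
  \sum_(h < n) (z + a *: dir gradf jj pp z) 0 h = \sum_(h < n) z 0 h.
Proof.
have E : forall h, (z + a *: dir gradf jj pp z) 0 h =
   z 0 h + a * gcoef gradf jj pp z * (if h == pp then 1 else 0) - a * gcoef gradf jj pp z * (if h == jj then 1 else 0).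
  by move=> h; rewrite entry_step mulrBr addrA.
rewrite (eq_bigr _ (fun h _ => E h)) sumrB big_split /= -!mulr_sumr !sum_ind1 !mulr1 addrK; by [].
Qed.

Lemma coord_step (z : 'rV[R]_n) jj pp a h : 0 <= a ->
  `|(z + a *: dir gradf jj pp z) 0 h - z 0 h| <= a * `|gcoef gradf jj pp z|.
Proof.
move=> a0; rewrite entry_step addrC addKr normrM normrM (ger0_norm a0) -[leRHS]mulr1.
apply: ler_wpM2l; first by rewrite mulr_ge0.
by case: (h == pp); case: (h == jj); rewrite ?subrr ?normr0 ?subr0 ?sub0r ?normrN ?normr1.
Qed.
End Step2.

Lemma coord_le (R : realType) n (v : 'rV[R]_n) i : `|v 0 i| <= `|v|.
Proof.
have /mapP[j Hj ->] : `|v ord0 i| \in [seq `|v x.1 x.2| | x : 'I_1 * 'I_n].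
  by apply/mapP; exists (ord0, i) => //=; rewrite mem_enum.
by rewrite [leRHS]/Num.Def.normr /= mx_normrE; apply/bigmax_geP; right => /=; exists j.
Qed.

Section Ereal2.
Variable R : realType.
Local Open Scope ereal_scope.

Lemma eps_exists (y : R) (L U : \bar R) : L < y%:E -> y%:E < U ->
  exists e : R, (0 < e)%R /\ (2 * e)%:E <= y%:E - L /\ (2 * e)%:E <= U - y%:E.
Proof.
case: L => [c| |] //; case: U => [d| |] // => hL hU; rewrite ?lte_fin in hL hU.
- case: (lerP (y - c) (d - y)) => hcd.
  + exists ((y - c) / 2)%R; rewrite -!EFinB !lee_fin; split; first lra.
    split; lra.
  + exists ((d - y) / 2)%R; rewrite -!EFinB !lee_fin; split; first lra.
    split; lra.
- exists ((y - c) / 2)%R; rewrite -!EFinB !lee_fin; split; first lra.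
  by split; [lra | rewrite leey].
- exists ((d - y) / 2)%R; rewrite -!EFinB !lee_fin; split; first lra.
  by split; [rewrite leey | lra].
- by exists 1%R; split; [lra | split; rewrite leey].
Qed.

Lemma shift_L (e y t : R) (L : \bar R) : (2 * e)%:E <= y%:E - L -> (`|y - t| < e)%R ->
  e%:E <= t%:E - L.
Proof.
case: L => [c| |] //=.
- rewrite -!EFinD !lee_fin => h1; rewrite ltr_distl => /andP[]; lra.
- by move=> _ _; rewrite addey // leey.
Qed.

Lemma shift_U (e y t : R) (U : \bar R) : (2 * e)%:E <= U - y%:E -> (`|y - t| < e)%R ->
  e%:E <= U - t%:E.
Proof.
case: U => [c| |] //=.
- rewrite -!EFinD !lee_fin => h1; rewrite ltr_distl => /andP[]; lra.
- by move=> _ _; rewrite addye // leey.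
Qed.
End Ereal2.

Unset Implicit Arguments.

Theorem proposition2 (R : realType) (n : nat) (f : 'rV[R]_n -> R)
  (gradf : 'rV[R]_n -> 'rV[R]_n) (l u : 'I_n -> \bar R) (b : R)
  (tau gamma delta Al Au : R)
  (x : nat -> 'rV[R]_n) (j : nat -> 'I_n) (p : nat -> ({perm 'I_n}))
  (A : nat -> nat -> R) (z : nat -> nat -> 'rV[R]_n) (alpha : nat -> nat -> R)
  (xstar : 'rV[R]_n) :
  (2 <= n)%N ->
  (forall i, l i != +oo%E) -> (forall i, u i != -oo%E) ->
  (forall i, (l i < u i)%E) ->
  (forall y, differentiable f y) ->
  (forall y v, 'd f y v = dotv (gradf y) v) ->
  (exists L : R, forall y w, `|gradf y - gradf w| <= L * `|y - w|) ->
  0 < tau <= 1 -> 0 < gamma < 1 -> 0 < delta < 1 -> 0 < Al <= Au ->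
  feasible l u b (x 0%N) ->
  compact [set y | feasible l u b y /\ f y <= f (x 0%N)] ->
  (forall y, feasible l u b y -> f y <= f (x 0%N) ->
     exists i, (l i < (y 0 i)%:E)%E /\ ((y 0 i)%:E < u i)%E) ->
  AC2CD_run f gradf l u tau gamma delta Al Au x j p A z alpha ->
  x @ \oo --> xstar ->
  exists kz : nat, forall k : nat, (kz <= k)%N ->
    forall i : nat, (i <= n)%N ->
      (l (j k) < (z k i 0 (j k))%:E)%E /\ ((z k i 0 (j k))%:E < u (j k))%E.
Proof.
move=> hn lfin ufin hlu fdiff fd _ /andP[tau0 tau1] /andP[gam0 gam1]
  /andP[del0 del1] /andP[Al0 AlAu] feas0 Scomp Sint run xcvg.
pose g k i := gcoef gradf (j k) (p k i) (z k i).
have step : forall k (i : 'I_n), feasible l u b (z k i) ->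
  [/\ feasible l u b (z k i.+1), 0 <= alpha k i <= Au,
      f (z k i.+1) <= f (z k i) - gamma * alpha k i * (g k i) ^+ 2 &
      forall h, `|z k i.+1 0 h - z k i 0 h| <= alpha k i * `|g k i|].
  move=> k i [sz bz].
  have [_ [_ [_ hrun]]] := run k.
  have [/andP[AlA AAu] [[m [ham [harm _]]] hz]] := hrun i.
  have A0 : 0 < A k i by apply: lt_le_trans AlA.
  have c01 : 0 <= delta ^+ m <= 1.
    by apply/andP; split; [rewrite exprn_ge0 // ltW | rewrite exprn_ile1 // ltW].
  have [ha hb] := step_box gradf (j k) (p k i) bz A0 c01.
  rewrite -ham in ha hb.
  split.
  - split; last by rewrite hz.
    by rewrite hz sum_step.
  - by move/andP: ha => [a0 aA]; rewrite a0 /= (le_trans aA AAu).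
  - move: harm; rewrite /armijo -ham -hz dot_dir /g.
    by move=> H; apply: (le_trans H); rewrite mulrN.
  - by move=> h; rewrite hz; apply: coord_step; case/andP: ha.
have dec : forall k (i : 'I_n), feasible l u b (z k i) -> f (z k i.+1) <= f (z k i).
  move=> k i fz; have [_ /andP[a0 _] d1 _] := step k i fz.
  apply: (le_trans d1); rewrite gerBl; apply: mulr_ge0; last exact: sqr_ge0.
  by apply: mulr_ge0 => //; exact: ltW.
have inner : forall k, feasible l u b (x k) -> forall i, (i <= n)%N ->
    feasible l u b (z k i) /\ f (z k i) <= f (x k).
  move=> k fx; elim=> [|i IH] hi.
    by have [_ [hz0 _]] := run k; rewrite hz0; split.
  have [fz fle] := IH (ltnW hi).
  have [f1 _ _ _] := step k (Ordinal hi) fz.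
  split=> //; exact: le_trans (dec k (Ordinal hi) fz) fle.
have mono : forall k, feasible l u b (x k) -> forall i m, (i <= m)%N -> (m <= n)%N ->
    f (z k m) <= f (z k i).
  move=> k fx i; elim=> [|m IH] him hm.
    by move: him; rewrite leqn0 => /eqP ->.
  move: him; rewrite leq_eqVlt => /orP[/eqP -> //|him].
  have [fz _] := inner k fx m (ltnW hm).
  exact: le_trans (dec k (Ordinal hm) fz) (IH him (ltnW hm)).
have outer : forall k, feasible l u b (x k) /\ f (x k) <= f (x 0%N).
  elim=> [|k [fk hk]]; first by split.
  have [_ [_ [hxn _]]] := run k.
  have [fz fle] := inner k fk n (leqnn n).
  rewrite hxn; split=> //; exact: le_trans fle hk.
have Scl : closed [set y | feasible l u b y /\ f y <= f (x 0%N)].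
  by apply: compact_closed Scomp.
have xS : [set y | feasible l u b y /\ f y <= f (x 0%N)] xstar.
  apply: (closed_cvg _ Scl _ xstar xcvg).
  by near=> k; exact: outer k.
have [i0 [hl0 hu0]] := Sint xstar xS.1 xS.2.
have [e [e0 [he1 he2]]] := eps_exists hl0 hu0.
have n0 : 0 < n%:R :> R by rewrite ltr0n (leq_trans _ hn).
pose eta := tau * e / (2 * n%:R).
have eta0 : 0 < eta by rewrite /eta divr_gt0 ?mulr_gt0.
have Au0 : 0 < Au by apply: lt_le_trans AlAu.
pose theta := gamma * eta ^+ 2 / (2 * Au).
have th0 : 0 < theta.
  rewrite /theta; apply: divr_gt0; first by apply: mulr_gt0 => //; exact: exprn_gt0.
  by apply: mulr_gt0.
have fc : (f \o x) @ \oo --> f xstar.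
  by apply: continuous_cvg => //; apply: differentiable_continuous.
move: fc => /cvgrPdist_lt /(_ theta th0) [N1 _ HN1].
move: (xcvg) => /cvgrPdist_lt /(_ e e0) [N2 _ HN2].
exists (maxn N1 N2) => k hk i hi.
have k1 : (N1 <= k)%N by apply: leq_trans hk; apply: leq_maxl.
have k2 : (N2 <= k)%N by apply: leq_trans hk; apply: leq_maxr.
have [fxk _] := outer k.
have fdiff1 : f (x k) - f (x k.+1) < 2 * theta.
  have h1 := HN1 k k1; have h2 := HN1 k.+1 (leqW k1).
  move: h1 h2; rewrite /= => h1 h2.
  rewrite ltr_distl in h1; rewrite ltr_distl in h2.
  case/andP: h1 => a1 a2; case/andP: h2 => b1 b2; lra.
have stepb : forall (i' : 'I_n) h, `|z k i'.+1 0 h - z k i' 0 h| <= eta.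
  move=> i' h.
  have [fz fzx] := inner k fxk i' (ltnW (ltn_ord i')).
  have [_ /andP[a0 aAu] d1 hc] := step k i' fz.
  have m1 := mono k fxk i'.+1 n (ltn_ord i') (leqnn n).
  have [_ [_ [hxn _]]] := run k.
  rewrite -hxn in m1.
  set q := alpha k i' * g k i' ^+ 2.
  have q0 : 0 <= q by rewrite /q mulr_ge0 // sqr_ge0.
  have gq : gamma * q < gamma * (eta ^+ 2 / Au).
    have -> : gamma * (eta ^+ 2 / Au) = 2 * theta.
      by rewrite /theta; field; apply: lt0r_neq0.
    rewrite /q mulrA; lra.
  have q1 : q < eta ^+ 2 / Au by rewrite -(ltr_pM2l gam0).
  have q2 : Au * q < eta ^+ 2 by rewrite -ltr_pdivlMl // mulrC.
  have w2 : (alpha k i' * `|g k i'|) ^+ 2 < eta ^+ 2.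
    have -> : (alpha k i' * `|g k i'|) ^+ 2 = alpha k i' * q.
      by rewrite /q exprMn real_normK ?num_real //; ring.
    apply: le_lt_trans q2; apply: ler_wpM2r => //.
  have w0 : 0 <= alpha k i' * `|g k i'| by rewrite mulr_ge0.
  apply: le_trans (hc h) _.
  move: w2 w0; set w := alpha k i' * `|g k i'|; move=> w2 w0; nra.
have sumb : forall i, (i <= n)%N -> forall h, `|z k i 0 h - x k 0 h| <= i%:R * eta.
  have [_ [hz0 _]] := run k.
  elim=> [|i' IH] hi' h; first by rewrite hz0 subrr normr0 mul0r.
  have := stepb (Ordinal hi') h; rewrite /= => hs.
  have := IH (ltnW hi') h => hI.
  have -> : z k i'.+1 0 h - x k 0 h = (z k i'.+1 0 h - z k i' 0 h) + (z k i' 0 h - x k 0 h).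
    by rewrite addrA subrK.
  apply: le_trans (ler_normD _ _) _.
  rewrite -natr1 mulrDl mul1r addrC; exact: lerD.
have zclose : `|z k i 0 (j k) - x k 0 (j k)| < tau * e.
  apply: le_lt_trans (sumb i hi (j k)) _.
  apply: (@le_lt_trans _ _ (n%:R * eta)).
    by apply: ler_wpM2r; [exact: ltW | rewrite ler_nat].
  have -> : n%:R * eta = tau * e / 2 by rewrite /eta; field; apply: lt0r_neq0.
  have te : 0 < tau * e by apply: mulr_gt0.
  lra.
have xe : `|xstar 0 i0 - x k 0 i0| < e.
  have H := HN2 k k2; simpl in H; apply: le_lt_trans H.
  by have := coord_le (xstar - x k) i0; rewrite !mxE.
have Di0 : (e%:E <= Dh l u (x k) i0)%E.
  by rewrite /Dh le_min; apply/andP; split; [exact: shift_L he1 xe | exact: shift_U he2 xe].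
have [hjk _] := run k.
have Dj : ((tau * e)%:E <= Dh l u (x k) (j k))%E.
  apply: le_trans hjk; rewrite EFinM; apply: lee_wpmul2l; first by rewrite lee_fin ltW.
  apply: le_trans Di0 _; exact: le_bigmax.
move: Dj; rewrite /Dh le_min => /andP[D1 D2].
by split; [exact: lt_subL D1 zclose | exact: lt_subU D2 zclose].
Unshelve. all: by end_near.
Qed.
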